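(* Let $N=\{1,\dots,n\}$ with $n\ge 2$ and $\mathcal{D}=\mathbb{R}^n_+$. A rule $R:\mathcal{D}\to\mathbb{R}^n_+$ satisfies scale invariance, downstream impartiality, upstream invariance, and equal treatment of equal source inflows if and only if it is a compromise rule, i.e. there exists $\lambda\in[0,1]$ such that for each $e\in\mathcal{D}$, $R(e)=\lambda R^{NT}(e)+(1-\lambda)R^{EFT}(e)$.
   Context: Agents $1,\dots,n$ are located along a linear river, lower index meaning more upstream; agent $i$ has river inflow $e_i\ge 0$, and $e=(e_1,\dots,e_n)\in\mathcal{D}=\mathbb{R}^n_+$. An allocation for $e$ is $x\in\mathbb{R}^n_+$ with $\sum_{i=1}^n x_i=\sum_{i=1}^n e_i$ and $\sum_{i=1}^k x_i\le\sum_{i=1}^k e_i$ for each $k=1,\dots,n-1$. A rule is a map $R:\mathcal{D}\to\mathbb{R}^n_+$ assigning to each $e$ an allocation $R(e)$ for $e$. No-transfer rule: $R^{NT}_i(e)=e_i$ for all $i$. Egalitarian full-transfer rule: $R^{EFT}_i(e)=\sum_{j<i}\frac{e_j}{n-j}$ for $i=1,\dots,n-1$ (so $R^{EFT}_1(e)=0$), and $R^{EFT}_n(e)=\sum_{j<n}\frac{e_j}{n-j}+e_n$. For $e\in\mathcal{D}$ with $e_k>0$ for some $k\le n-1$, its source is $s(e)=\min\{k\in\{1,\dots,n-1\}:e_k>0\}$. Axioms: Scale invariance: for each $e\in\mathcal{D}$ and each $\gamma\in\mathbb{R}_+$, $R(\gamma e)=\gamma R(e)$. Upstream invariance: for each $e,e'\in\mathcal{D}$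 such that $e_i<e'_i$ for some $i\in N$ and $e_j=e'_j$ for all $j\ne i$, we have $R_k(e)=R_k(e')$ for each $k<i$. Downstream impartiality: for each $e,e'\in\mathcal{D}$ such that $e_i<e'_i$ for some $i\in N$ and $e_j=e'_j$ for all $j\ne i$, and for each $k,l>i$ with $e_k=e_l$, we have $R_k(e')-R_k(e)=R_l(e')-R_l(e)$. Equal treatment of equal source inflows: for each $e,e'\in\mathcal{D}$ (with sources defined) such that $e_{s(e)}=e'_{s(e')}$, $R_{s(e)}(e)=R_{s(e')}(e')$. *)

(* Defs.v *)
From HB Require Import structures.
From mathcomp Require Import all_boot all_order all_algebra.
From mathcomp Require Import reals.
Set Implicit Arguments. Unset Strict Implicit. Unset Printing Implicit Defensive.
Import Order.TTheory GRing.Theory Num.Theory.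
Local Open Scope ring_scope.

(* Agents are 'I_n; ordinal i (0-based) is agent i+1 of the paper.
   Lower index = more upstream. *)

Section River.
Variables (R : realType) (n : nat).

Definition profile := 'I_n -> R.

Definition in_D (e : profile) : Prop := forall i, 0 <= e i.

Definition allocation (e x : profile) : Prop :=
  [/\ forall i, 0 <= x i,
      \sum_(i < n) x i = \sum_(i < n) e i &
      forall k : nat, (1 <= k <= n.-1)%N ->
        \sum_(i < n | (i < k)%N) x i <= \sum_(i < n | (i < k)%N) e i].

(* A rule assigns to every e in D an allocation for e (values off D are irrelevant). *)
Definition is_rule (F : profile -> profile) : Prop :=
  forall e, in_D e -> allocation e (F e).

Definition R_NT (e : profile) : profile := fun i => e i.

(* Egalitarian full-transfer rule.  With 1-based agent j = (val j).+1,
   R_i(e) = sum_{j<i} e_j/(n-j) for i <= n-1, plus e_n for i = n. *)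
Definition R_EFT (e : profile) : profile := fun i =>
  \sum_(j < n | (j < i)%N) e j / (n - j.+1)%:R
  + (if val i == n.-1 then e i else 0).

(* k (0-based) is the source s(e): the most upstream agent among agents
   1..n-1 (0-based 0..n-2) with positive inflow. *)
Definition is_source (e : profile) (k : 'I_n) : Prop :=
  [/\ (k < n.-1)%N, 0 < e k & forall j : 'I_n, (j < k)%N -> ~ (0 < e j)].

Definition scale_invariance (F : profile -> profile) : Prop :=
  forall (e : profile) (g : R), in_D e -> 0 <= g ->
    forall i, F (fun j => g * e j) i = g * F e i.

Definition raise_at (e e' : profile) (i : 'I_n) : Prop :=
  e i < e' i /\ forall j, j != i -> e j = e' j.

Definition upstream_invariance (F : profile -> profile) : Prop :=
  forall (e e' : profile) (i : 'I_n), in_D e -> in_D e' -> raise_at e e' i ->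
    forall k : 'I_n, (k < i)%N -> F e k = F e' k.

Definition downstream_impartiality (F : profile -> profile) : Prop :=
  forall (e e' : profile) (i : 'I_n), in_D e -> in_D e' -> raise_at e e' i ->
    forall k l : 'I_n, (i < k)%N -> (i < l)%N -> e k = e l ->
      F e' k - F e k = F e' l - F e l.

Definition equal_treatment_source (F : profile -> profile) : Prop :=
  forall (e e' : profile) (k k' : 'I_n), in_D e -> in_D e' ->
    is_source e k -> is_source e' k' -> e k = e' k' -> F e k = F e' k'.

Definition compromise_rule (F : profile -> profile) : Prop :=
  exists lam : R, [/\ 0 <= lam, lam <= 1 &
    forall e, in_D e -> forall i,
      F e i = lam * R_NT e i + (1 - lam) * R_EFT e i].

End River.

(* Main.v *)
Require Import Defs.
From HB Require Import structures.
From mathcomp Require Import all_boot all_order all_algebra.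
From mathcomp Require Import reals ring lra.
From Stdlib Require Import FunctionalExtensionality.
Set Implicit Arguments. Unset Strict Implicit. Unset Printing Implicit Defensive.
Import Order.TTheory GRing.Theory Num.Theory.
Local Open Scope ring_scope.

Section Aux.
Variables (R : realType) (n : nat).

Lemma sum_ltS (f : 'I_n -> R) (i : 'I_n) :
  \sum_(j < n | (j < i.+1)%N) f j = \sum_(j < n | (j < i)%N) f j + f i.
Proof.
rewrite (bigD1 i) ?ltnSn //= addrC; congr (_ + _).
apply: eq_bigl => j; rewrite ltnS leq_eqVlt -val_eqE /=.
by case: (ltngtP j i) => //= ->; rewrite eqxx.
Qed.

Lemma sum_lt0 (f : 'I_n -> R) : \sum_(j < n | (j < 0)%N) f j = 0.
Proof. by rewrite big_pred0 // => j; rewrite ltn0. Qed.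

Lemma count_lt (i : nat) : (i <= n)%N -> \sum_(j < n | (j < i)%N) (1 : R) = i%:R.
Proof.
elim: i => [|i IH] Hi; first by rewrite sum_lt0.
by rewrite (sum_ltS _ (Ordinal Hi)) /= IH ?(ltnW Hi) // -natr1.
Qed.

Lemma count_ge (i : nat) (c : R) : (i <= n)%N ->
  \sum_(j < n | ~~ (j < i)%N) c = (n%:R - i%:R) * c.
Proof.
move=> Hi; rewrite (eq_bigr (fun _ => 1 * c)); last by move=> *; rewrite mul1r.
rewrite -big_distrl /=; congr (_ * _).
have H : \sum_(j < n) (1:R) = \sum_(j < n | (j < i)%N) 1 + \sum_(j < n | ~~ (j < i)%N) 1.
  by rewrite (bigID (fun j : 'I_n => (j < i)%N)).
move: H; rewrite count_lt // sumr_const card_ord => ->. by rewrite addrC addKr.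
Qed.
End Aux.

Section Main.
Variables (R : realType) (n : nat) (hn : (2 <= n)%N).
Variables (F : profile R n -> profile R n) (HF : is_rule F).

Definition S (e : profile R n) (k : nat) : R :=
  \sum_(j < n | (j < k)%N) e j / (n - j.+1)%:R.

Lemma S_step (e : profile R n) (i : 'I_n) :
  S e i.+1 = S e i + e i / (n - i.+1)%:R.
Proof. by rewrite /S sum_ltS. Qed.

Lemma S0 (e : profile R n) : S e 0 = 0.
Proof. by rewrite /S sum_lt0. Qed.

Lemma alg_id (lam : R) (e : profile R n) (i : nat) : (i < n)%N ->
  \sum_(k < n | (k < i)%N) e k
  - \sum_(k < n | (k < i)%N) (lam * e k + (1 - lam) * S e k)
  = (n%:R - i%:R) * ((1 - lam) * S e i).
Proof.
elim: i => [|i IH] Hi.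
  by rewrite !sum_lt0 S0 subrr !mulr0.
have Hi' : (i < n)%N by apply: ltnW.
have := IH Hi'.
rewrite (sum_ltS _ (Ordinal Hi')) (sum_ltS _ (Ordinal Hi')) /=.
rewrite (S_step e (Ordinal Hi')) /=.
rewrite natrB // -natr1.
have Hc : n%:R - (i%:R + 1) != 0 :> R.
  rewrite subr_eq0 natr1 eqr_nat; apply/eqP => E; move: Hi; rewrite -E ltnn //.
move: Hc; set c := n%:R - (i%:R + 1); set x := e (Ordinal Hi'); set Si := S e i.
set A := \sum_(k < n | (k < i)%N) e k.
set B := \sum_(k < n | (k < i)%N) (lam * e k + (1 - lam) * S e k).
move=> Hc H.
have Hn : n%:R = c + i%:R + 1 by rewrite /c; ring.
rewrite Hn in H *.
have -> : c * ((1 - lam) * (Si + x / c)) = (1-lam) * (c * Si) + (1-lam)*x*(c/c) by ring.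
rewrite divff // mulr1.
have HA : A = B + (c+1)*((1-lam)*Si) by rewrite -[A](subrK B) H; ring.
rewrite HA; ring.
Qed.


Variables (SI : scale_invariance F) (DI : downstream_impartiality F)
  (UI : upstream_invariance F) (ET : equal_treatment_source F).

Lemma single_diff (e e' : profile R n) (m : 'I_n) : in_D e -> in_D e' ->
  (forall j, j != m -> e j = e' j) -> forall k : 'I_n, (k < m)%N -> F e k = F e' k.
Proof.
move=> De De' H k Hk.
case: (ltgtP (e m) (e' m)) => Hm.
- exact: (UI De De' (conj Hm H)).
- apply/esym; apply: (UI De' De _ Hk); split => // j /H ->; done.
- have -> : e = e' by apply: functional_extensionality => j; case: (eqVneq j m) => [->|/H].
  done.
Qed.

Lemma agree (e e' : profile R n) (i : 'I_n) : in_D e -> in_D e' ->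
  (forall j : 'I_n, (j <= i)%N -> e j = e' j) -> F e i = F e' i.
Proof.
move=> De De' H.
pose u m := fun j : 'I_n => if (j < m)%N then e j else e' j.
have Du m : in_D (u m) by move=> j; rewrite /u; case: ifP.
have claim : forall m, (i < m)%N -> (m <= n)%N -> F (u m) i = F e' i.
  elim=> [|m IH] // Him Hmn.
  case: (ltngtP i m) => Hm.
  - rewrite -IH ?(ltnW Hmn) //.
    apply: (single_diff (Du _) (Du _) (m := Ordinal Hmn)) => //= j Hj.
    rewrite /u ltnS leq_eqVlt.
    have -> : (val j == m) = false by apply/negbTE; move: Hj; rewrite -val_eqE.
    done.
  - by move: Him; rewrite ltnS leqNgt Hm.
  - have -> : u m.+1 = e' by apply: functional_extensionality => j; rewrite /u;
      case: ifP => // Hj; apply: H; rewrite Hm -ltnS.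
    done.
have -> : e = u n by apply: functional_extensionality => j; rewrite /u ltn_ord.
exact: claim.
Qed.

Lemma F0 (i : 'I_n) : F (fun _ => 0) i = 0.
Proof.
have Dz : in_D (fun _ : 'I_n => 0 : R) by move=> j.
by have := SI Dz (lexx 0) i; rewrite mul0r => ->; rewrite mul0r.
Qed.

Definition o0 : 'I_n := Ordinal (ltnW hn).
Definition delta : profile R n := fun j => if val j == 0%N then 1 else 0.
Definition lam := F delta o0.

Lemma Ddelta : in_D delta.
Proof. by move=> j; rewrite /delta; case: ifP. Qed.

Lemma lam_bounds : 0 <= lam /\ lam <= 1.
Proof.
have [H1 _ H3] := HF Ddelta.
split; first exact: H1.
have := H3 1%N; rewrite /= -subn1 subn_gt0 hn => /(_ isT).
have E (f : profile R n) : \sum_(j < n | (j < 1)%N) f j = f o0.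
  by rewrite (sum_ltS _ o0) sum_lt0 add0r.
by rewrite !E /delta /=.
Qed.

Lemma src_val (e : profile R n) (k : 'I_n) : in_D e -> (k < n.-1)%N -> 0 < e k ->
  (forall j : 'I_n, (j < k)%N -> e j = 0) -> F e k = lam * e k.
Proof.
move=> De Hk Hpos Hz.
pose p := fun j => e k * delta j.
have Dp : in_D p by move=> j; rewrite /p mulr_ge0 // Ddelta.
have Hp : F p o0 = e k * lam by exact: (SI Ddelta (ltW Hpos) o0).
rewrite mulrC -Hp.
apply: (ET De Dp).
- by rewrite /is_source; split => // j /Hz ->; rewrite ltxx.
- rewrite /is_source; split => //=; first by rewrite -subn1 subn_gt0.
  by rewrite /p /delta /= mulr1.
- by rewrite /p /delta /= mulr1.
Qed.

Lemma step (i : 'I_n)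
  (IH : forall k : 'I_n, (k < i)%N -> forall e, in_D e ->
          F e k = lam * e k + (1 - lam) * S e k) :
  forall e, in_D e ->
    F e i = lam * e i + (1 - lam) * (S e i + (if val i == n.-1 then e i else 0)).
Proof.
move=> e De.
pose r := fun j : 'I_n => if (j < i)%N then e j else e i.
pose s := fun j : 'I_n => if (j < i)%N then 0 else e i.
have Dr : in_D r by move=> j; rewrite /r; case: ifP.
have Ds : in_D s by move=> j; rewrite /s; case: ifP.
have H1 : F e i = F r i.
  apply: agree => // j Hj; rewrite /r; case: ifP => // /negbT; rewrite -leqNgt => Hij.
  by congr (e _); apply: val_inj; apply/eqP; rewrite eqn_leq Hj Hij.
have H2 : forall k : 'I_n, ~~ (k < i)%N -> F r k - F s k = F r i - F s i.
  pose t m := fun j : 'I_n => if (j < m)%N then r j else s j.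
  have Dt m : in_D (t m) by move=> j; rewrite /t; case: ifP.
  have claim : forall m, (m <= i)%N -> forall k : 'I_n, ~~ (k < i)%N ->
      F (t m) k - F s k = F (t m) i - F s i.
    elim=> [|m IHm] Hm k Hk.
      have -> : t 0%N = s by apply: functional_extensionality => j; rewrite /t ltn0.
      by rewrite !subrr.
    have Hmi : (m < i)%N := Hm.
    have Hmn : (m < n)%N := ltn_trans Hmi (ltn_ord i).
    pose mo := Ordinal Hmn.
    have Hne : forall j : 'I_n, j != mo -> t m j = t m.+1 j.
      move=> j Hj; rewrite /t [in RHS]ltnS [in RHS]leq_eqVlt.
      have -> : (val j == m) = false by apply/negbTE; move: Hj; rewrite -val_eqE.
      done.
    have Htm : t m mo = 0 by rewrite /t /= ltnn /s /= Hmi.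
    have Htm1 : t m.+1 mo = e mo by rewrite /t /= ltnSn /r /= Hmi.
    have := De mo; rewrite le0r => /orP [/eqP E0|Epos].
      have -> : t m.+1 = t m.
        apply: functional_extensionality => j; case: (eqVneq j mo) => [->|/Hne //].
        by rewrite Htm Htm1 E0.
      exact: IHm (ltnW Hm) k Hk.
    have Hr : raise_at (t m) (t m.+1) mo by split; [rewrite Htm Htm1|].
    have Hki : (mo < k)%N by apply: leq_trans Hmi _; rewrite leqNgt.
    have Heq : t m k = t m i.
      rewrite /t /s (negbTE Hk) ltnn.
      have -> : (k < m)%N = false by apply/negbTE; rewrite -leqNgt ltnW.
      by have -> : (i < m)%N = false by apply/negbTE; rewrite -leqNgt ltnW.
    have := DI (Dt m) (Dt m.+1) Hr Hki Hmi Heq.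
    have := IHm (ltnW Hm) k Hk.
    move=> A B; lra.
  have -> : r = t i by apply: functional_extensionality => j; rewrite /t /r /s; case: ifP.
  exact: claim.
have Hsplit : forall f : profile R n, \sum_(k<n) f k =
    \sum_(k<n | (k<i)%N) f k + \sum_(k<n | ~~(k<i)%N) f k.
  by move=> f; rewrite (bigID (fun k : 'I_n => (k < i)%N)).
set D := F r i - F s i.
have Hlow : forall k : 'I_n, (k < i)%N -> F r k - F s k = lam * e k + (1 - lam) * S e k.
  move=> k Hk; rewrite !IH //.
  have -> : r k = e k by rewrite /r Hk.
  have -> : s k = 0 by rewrite /s Hk.
  have -> : S r k = S e k.
    by rewrite /S; apply: eq_bigr => j Hj; rewrite /r (ltn_trans Hj Hk).
  have -> : S s k = 0.
    by rewrite /S big1 // => j Hj; rewrite /s (ltn_trans Hj Hk) mul0r.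
  by rewrite mulr0 mulr0 addr0 subr0.
have Hlows : forall k : 'I_n, (k < i)%N -> F s k = 0.
  move=> k Hk; rewrite IH //.
  have -> : s k = 0 by rewrite /s Hk.
  have -> : S s k = 0.
    by rewrite /S big1 // => j Hj; rewrite /s (ltn_trans Hj Hk) mul0r.
  by rewrite !mulr0 addr0.
have [_ Br _] := HF Dr.
have [_ Bs _] := HF Ds.
have Hsum : \sum_(k<n | (k<i)%N) e k
    - \sum_(k<n | (k<i)%N) (lam * e k + (1-lam) * S e k) = (n%:R - i%:R) * D.
  have : \sum_(k<n) (F r k - F s k) = \sum_(k<n) (r k - s k) by rewrite !sumrB Br Bs.
  rewrite (Hsplit (fun k => F r k - F s k)) (Hsplit (fun k => r k - s k)) /=.
  rewrite (eq_bigr _ Hlow) (eq_bigr (fun _ => D) H2) count_ge ?(ltnW (ltn_ord i)) //.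
  have -> : \sum_(k<n | (k<i)%N) (r k - s k) = \sum_(k<n | (k<i)%N) e k.
    by apply: eq_bigr => k Hk; rewrite /r /s Hk subr0.
  have -> : \sum_(k<n | ~~ (k<i)%N) (r k - s k) = 0.
    by rewrite big1 // => k Hk; rewrite /r /s (negbTE Hk) subrr.
  move=> H; lra.
have Hni : n%:R - i%:R != 0 :> R.
  by rewrite subr_eq0 eqr_nat neq_ltn ltn_ord orbT.
have HD : D = (1 - lam) * S e i.
  by apply: (mulfI Hni); rewrite -Hsum alg_id.
have Hs : F s i = if val i == n.-1 then e i else lam * e i.
  case: eqP => Hin.
  - have Hk : forall k : 'I_n, ~~ (k < i)%N -> k = i.
      move=> k Hk; apply: val_inj; apply/eqP.
      rewrite -leqNgt in Hk; rewrite eqn_leq Hk andbT Hin -ltnS prednK ?ltn_ord //.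
      exact: ltnW hn.
    move: Bs; rewrite (Hsplit (F s)) (Hsplit s).
    rewrite big1; last by move=> k Hk'; rewrite Hlows.
    rewrite [\sum_(k<n | (k<i)%N) s k]big1; last by move=> k Hk'; rewrite /s Hk'.
    have E1 : \sum_(k<n | ~~ (k<i)%N) F s k = \sum_(k<n | ~~ (k<i)%N) F s i.
      by apply: eq_bigr => k /Hk ->.
    have E2 : \sum_(k<n | ~~ (k<i)%N) s k = \sum_(k<n | ~~ (k<i)%N) e i.
      by apply: eq_bigr => k Hk'; rewrite /s (negbTE Hk').
    rewrite E1 E2.
    rewrite !count_ge ?(ltnW (ltn_ord i)) // !add0r.
    exact: mulfI.
  - have Hin' : (i < n.-1)%N.
      rewrite ltn_neqAle; apply/andP; split; first by apply/eqP.
      by rewrite -ltnS prednK ?ltn_ord //; exact: ltnW hn.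
    have := De i; rewrite le0r => /orP [/eqP E0|Epos].
      have -> : s = (fun _ => 0).
        by apply: functional_extensionality => j; rewrite /s E0; case: ifP.
      by rewrite F0 E0 mulr0.
    have -> : lam * e i = lam * s i by rewrite /s ltnn.
    apply: src_val => //; first by rewrite /s ltnn.
    by move=> j Hj; rewrite /s Hj.
have -> : F e i = D + F s i by rewrite H1 /D subrK.
rewrite HD Hs; case: eqP => _; ring.
Qed.

Lemma main_all (i : 'I_n) (e : profile R n) : in_D e ->
  F e i = lam * e i + (1 - lam) * (S e i + (if val i == n.-1 then e i else 0)).
Proof.
suff H : forall m (i : 'I_n), (i < m)%N -> forall e, in_D e ->
  F e i = lam * e i + (1 - lam) * (S e i + (if val i == n.-1 then e i else 0)).
  exact: (H n).
elim=> [|m IH] // j Hj.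
case: (ltngtP j m) => Hjm.
- exact: IH.
- by move: Hj; rewrite ltnS leqNgt Hjm.
- apply: step => k Hk e' De'.
  rewrite IH; last by move: Hk; rewrite Hjm.
  have -> : (val k == n.-1) = false.
    apply/negbTE; rewrite neq_ltn; apply/orP; left.
    apply: leq_trans Hk _; rewrite -ltnS prednK ?ltn_ord //; exact: ltnW hn.
  by rewrite addr0.
by move: Hk; rewrite Hjm.
Qed.

End Main.

Section Back.
Variables (R : realType) (n : nat) (F : profile R n -> profile R n) (l : R).
Hypothesis HF' : forall e, in_D e -> forall i,
      F e i = l * R_NT e i + (1 - l) * R_EFT e i.

Lemma back_SI : scale_invariance F.
Proof.
move=> e g De Hg i.
have Dg : in_D (fun j => g * e j) by move=> j; rewrite mulr_ge0.
rewrite !HF' // /R_NT /R_EFT.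
rewrite (eq_bigr (fun j : 'I_n => g * (e j / (n - j.+1)%:R))); last by move=> j _; rewrite mulrA.
rewrite -mulr_sumr; case: ifP => _; ring.
Qed.

Lemma back_UI : upstream_invariance F.
Proof.
move=> e e' i De De' [Hlt Heq] k Hk.
rewrite !HF' // /R_NT /R_EFT.
have Hki : k != i by rewrite -val_eqE /= neq_ltn Hk.
rewrite Heq //; congr (_ + _ * (_ + _)).
apply: eq_bigr => j Hj; rewrite Heq //.
by rewrite -val_eqE /= neq_ltn (ltn_trans Hj Hk).
Qed.

Lemma back_diff (e e' : profile R n) (i : 'I_n) : in_D e -> in_D e' -> raise_at e e' i ->
  forall k : 'I_n, (i < k)%N ->
    F e' k - F e k = (1 - l) * ((e' i - e i) / (n - i.+1)%:R).
Proof.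
move=> De De' [Hlt Heq] k Hk.
rewrite !HF' // /R_NT /R_EFT.
have Hki : k != i by rewrite -val_eqE /= neq_ltn Hk orbT.
have ek : e' k = e k by rewrite Heq.
set A := \sum_(j < n | (j < k)%N) e' j / (n - j.+1)%:R.
set B := \sum_(j < n | (j < k)%N) e j / (n - j.+1)%:R.
have HA : A - B = (e' i - e i) / (n - i.+1)%:R.
  rewrite /A /B -sumrB (bigD1 i) //= big1 ?addr0; first by rewrite mulrBl.
  by move=> j /andP [_ Hj]; rewrite -(Heq j Hj) subrr.
have -> : A = B + (e' i - e i) / (n - i.+1)%:R by rewrite -HA addrC subrK.
rewrite ek; case: ifP => _; ring.
Qed.

Lemma back_DI : downstream_impartiality F.
Proof.
move=> e e' i De De' Hr k l' Hk Hl _.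
by rewrite (back_diff De De' Hr Hk) (back_diff De De' Hr Hl).
Qed.

Lemma back_src (e : profile R n) (k : 'I_n) : in_D e -> is_source e k -> F e k = l * e k.
Proof.
move=> De [Hk Hpos Hz].
rewrite HF' // /R_NT /R_EFT.
have -> : (val k == n.-1) = false by apply/negbTE; rewrite neq_ltn Hk.
rewrite big1 ?addr0 ?mulr0 ?addr0 //.
move=> j Hj; have := De j; rewrite le0r => /orP [/eqP -> |/(Hz j Hj) //].
by rewrite mul0r.
Qed.

Lemma back_ET : equal_treatment_source F.
Proof.
move=> e e' k k' De De' Hs Hs' Hek.
by rewrite (back_src De Hs) (back_src De' Hs') Hek.
Qed.

End Back.

Unset Implicit Arguments.

Theorem theorem2 (R : realType) (n : nat) (hn : (2 <= n)%N)
    (F : profile R n -> profile R n) (HF : is_rule F) :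
  (scale_invariance F /\ downstream_impartiality F /\
   upstream_invariance F /\ equal_treatment_source F)
  <-> compromise_rule F.
Proof.
split.
- move=> [SI [DI [UI ET]]].
  have [H0 H1] := lam_bounds hn HF.
  exists (lam hn F); split => // e De i.
  by rewrite (main_all hn HF SI DI UI ET i De).
- move=> [l [H0 H1 HF']].
  split; first exact: (back_SI HF').
  split; first exact: (back_DI HF').
  split; first exact: (back_UI HF').
  exact: (back_ET HF').
Qed.
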